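(* Let $k\ge 2$ and $\mathcal{M}=\{M_1,\dots,M_k\}\subseteq\mathbb{S}^n$. Suppose that for all distinct indices $i,j\in\{1,\dots,k\}$ there exists $(\alpha,\beta)\neq(0,0)$ such that $\alpha M_i+\beta M_j$ is positive semidefinite. Then $\mathcal{S}(\mathcal{M})=\{X\in\mathbb{S}^n_+:\langle M_i,X\rangle\ge 0\ \forall i\in\{1,\dots,k\}\}$ is rank-one generated.
   Context: $\mathbb{S}^n$ is the space of real symmetric $n\times n$ matrices with $\langle A,B\rangle=\mathrm{tr}(AB)$, and $\mathbb{S}^n_+$ the PSD cone. A closed convex cone $\mathcal{S}\subseteq\mathbb{S}^n_+$ is rank-one generated (ROG) if $\mathcal{S}=\mathrm{conv}(\mathcal{S}\cap\{xx^\top:x\in\mathbb{R}^n\})$. *)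

(* Defs.v *)
From HB Require Import structures.
From mathcomp Require Import all_boot all_order all_algebra.
From mathcomp Require Import reals.
Set Implicit Arguments. Unset Strict Implicit. Unset Printing Implicit Defensive.
Import Order.TTheory GRing.Theory Num.Theory.
Local Open Scope ring_scope.

Section Defs.
Variables (R : realType) (n : nat).

Definition symmat (A : 'M[R]_n) : Prop := A^T = A.

Definition frob (A B : 'M[R]_n) : R := \tr (A *m B).

Definition psd (A : 'M[R]_n) : Prop :=
  symmat A /\ forall x : 'cV[R]_n, 0 <= (x^T *m A *m x) 0 0.

Definition rank_one_psd (X : 'M[R]_n) : Prop :=
  exists x : 'cV[R]_n, X = x *m x^T.

Definition conv (S : 'M[R]_n -> Prop) (X : 'M[R]_n) : Prop :=
  exists (m : nat) (w : 'I_m -> R) (A : 'I_m -> 'M[R]_n),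
    (forall i, 0 <= w i) /\ \sum_(i < m) w i = 1 /\
    (forall i, S (A i)) /\ X = \sum_(i < m) w i *: A i.

Definition ROG (S : 'M[R]_n -> Prop) : Prop :=
  forall X, S X <-> conv (fun Y => S Y /\ rank_one_psd Y) X.

Definition SM (k : nat) (M : 'I_k -> 'M[R]_n) (X : 'M[R]_n) : Prop :=
  psd X /\ forall i, 0 <= frob (M i) X.

End Defs.

(* Main.v *)
Require Import Defs.
From HB Require Import structures.
From mathcomp Require Import all_boot all_order all_algebra.
From mathcomp Require Import reals.
Import Order.TTheory GRing.Theory Num.Theory.
Local Open Scope ring_scope.
From mathcomp.algebra_tactics Require Import ring lra.
From mathcomp Require Import zify.
From Stdlib Require Import Classical.
Import Order.TTheory GRing.Theory Num.Theory.
Local Open Scope ring_scope.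

Set Implicit Arguments. Unset Strict Implicit. Unset Printing Implicit Defensive.

Section Basics.
Variables (R : realType) (n : nat).
Implicit Types (A B P X Y : 'M[R]_n) (u v w x y : 'cV[R]_n).

Definition out v : 'M[R]_n := v *m v^T.
Definition OS (L : seq 'cV[R]_n) : 'M[R]_n := \sum_(v <- L) out v.
Definition Q A v : R := frob A (out v).

Lemma frobD A X Y : frob A (X + Y) = frob A X + frob A Y.
Proof. by rewrite /frob mulmxDr mxtraceD. Qed.
Lemma frobZ A a X : frob A (a *: X) = a * frob A X.
Proof. by rewrite /frob -scalemxAr mxtraceZ. Qed.
Lemma frob0 A : frob A 0 = 0.
Proof. by rewrite /frob mulmx0 /mxtrace big1 // => i _; rewrite mxE. Qed.
Lemma frobN A X : frob A (- X) = - frob A X.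
Proof. by rewrite -scaleN1r frobZ mulN1r. Qed.
Lemma frobB A X Y : frob A (X - Y) = frob A X - frob A Y.
Proof. by rewrite frobD frobN. Qed.
Lemma frobDl A B X : frob (A + B) X = frob A X + frob B X.
Proof. by rewrite /frob mulmxDl mxtraceD. Qed.
Lemma frobZl a A X : frob (a *: A) X = a * frob A X.
Proof. by rewrite /frob -scalemxAl mxtraceZ. Qed.
Lemma frobNl A X : frob (- A) X = - frob A X.
Proof. by rewrite -scaleN1r frobZl mulN1r. Qed.
Lemma frob_sum A (L : seq 'cV[R]_n) (F : 'cV[R]_n -> 'M[R]_n) :
  frob A (\sum_(v <- L) F v) = \sum_(v <- L) frob A (F v).
Proof.
elim: L => [|v L IH]; first by rewrite !big_nil frob0.
by rewrite !big_cons frobD IH.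
Qed.
Lemma sumQ A L : \sum_(v <- L) Q A v = frob A (OS L).
Proof. by rewrite /OS frob_sum. Qed.

Lemma frob_outer A u w : frob A (u *m w^T) = (w^T *m A *m u) 0 0.
Proof.
by rewrite /frob mulmxA mxtrace_mulC mulmxA /mxtrace big_ord1.
Qed.

Lemma psd_Q P v : psd P -> 0 <= Q P v.
Proof. by move=> [_ h]; rewrite /Q /out frob_outer. Qed.

Lemma out_lin a b u w :
  out (a *: u + b *: w) = a ^+ 2 *: out u + (a * b) *: (u *m w^T + w *m u^T)
     + b ^+ 2 *: out w.
Proof.
apply/matrixP => i j; rewrite /out !mxE !big_ord1 !mxE.
ring.
Qed.

Lemma Q_lin A a b u w :
  Q A (a *: u + b *: w) = a ^+ 2 * Q A u + (a * b) * frob A (u *m w^T + w *m u^T)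
     + b ^+ 2 * Q A w.
Proof. by rewrite /Q out_lin !frobD !frobZ frobD. Qed.

Lemma outZ a u : out (a *: u) = a ^+ 2 *: out u.
Proof. by apply/matrixP => i j; rewrite /out !mxE !big_ord1 !mxE; ring. Qed.

Lemma QZ A a u : Q A (a *: u) = a ^+ 2 * Q A u.
Proof. by rewrite /Q outZ frobZ. Qed.

Lemma cross0 P v : (forall x, 0 <= Q P x) -> Q P v = 0 ->
  forall x, frob P (v *m x^T + x *m v^T) = 0.
Proof.
move=> hP hv x.
set c := frob P _. set d := Q P x.
have hd : 0 <= d by apply: hP.
set t := - c / (d + 1).
have := hP (1 *: v + t *: x); rewrite Q_lin hv expr1n mulr0 mul1r add0r -/c -/d.
have hd1 : d + 1 != 0 by rewrite gt_eqF // ltr_wpDl.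
have -> : t * c + t ^+ 2 * d = - (c ^+ 2) / (d + 1) ^+ 2.
  rewrite /t; field; exact: hd1.
rewrite pmulr_lge0 ?invr_gt0 ?exprn_gt0 ?ltr_wpDl // oppr_ge0 => hc.
have : c ^+ 2 = 0 by apply/eqP; rewrite eq_le hc sqr_ge0.
by move/eqP; rewrite sqrf_eq0 => /eqP.
Qed.

End Basics.

Section Decomp.
Variables (R : realType) (n : nat).
Implicit Types (A B P X Y : 'M[R]_n) (u v w x y : 'cV[R]_n).

Definition ev (j : 'I_n) : 'cV[R]_n := delta_mx j 0.

Lemma ev_entry X j l : ((ev j)^T *m X *m ev l) 0 0 = X j l.
Proof.
rewrite /ev trmx_delta -colE -rowE !mxE //.
Qed.

Lemma frob_swap X u w : symmat X -> frob X (u *m w^T) = frob X (w *m u^T).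
Proof.
move=> hX; rewrite !frob_outer.
rewrite -[in LHS](trmxK (w^T *m X *m u)) [in LHS]mxE.
by rewrite !trmx_mul trmxK hX mulmxA.
Qed.

Lemma outT u : (out u)^T = out u.
Proof. by rewrite /out trmx_mul trmxK. Qed.

Lemma Q_out c x : Q (out c) x = ((x^T *m c) 0 0) ^+ 2.
Proof.
rewrite /Q /out frob_outer !mulmxA -(mulmxA (x^T *m c)) mxE big_ord1 expr2.
congr (_ * _); rewrite -[in LHS](trmxK (c^T *m x)) [in LHS]mxE.
by rewrite trmx_mul trmxK.
Qed.

Lemma sym_zero X : symmat X -> (forall x, 0 <= Q X x) ->
  (forall j, Q X (ev j) = 0) -> X = 0.
Proof.
move=> hs hp hz; apply/matrixP => j l; rewrite mxE.
have h := cross0 hp (hz j) (ev l).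
rewrite frobD (frob_swap _ _ hs) -mulr2n -mulr_natr in h.
have : frob X (ev l *m (ev j)^T) = 0.
  by move: h => /eqP; rewrite mulf_eq0 pnatr_eq0 orbF => /eqP.
by rewrite frob_outer ev_entry.
Qed.

End Decomp.
Arguments ev {R n}.

Lemma count_lt (T : eqType) (p1 p2 : pred T) (s : seq T) x :
  (forall y, p1 y -> p2 y) -> x \in s -> p2 x -> ~~ p1 x ->
  (count p1 s < count p2 s)%N.
Proof.
move=> h12; elim: s => [//|y s IH]; rewrite inE /= => /orP [/eqP <-|hx] h2 h1.
  by rewrite h2 (negbTE h1) add0n add1n ltnS sub_count.
have := IH hx h2 h1; case: (p1 y) (h12 y) => [->//|_] /=.
by rewrite add0n => /leq_trans; apply; apply: leq_addl.
Qed.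

Section Decomp2.
Variables (R : realType) (n : nat).
Implicit Types (A B P X Y : 'M[R]_n) (u v w x y : 'cV[R]_n).

Lemma frobDl' A B X : frob (A - B) X = frob A X - frob B X.
Proof. by rewrite frobDl frobNl. Qed.

Lemma step_Q X (i : 'I_n) x : symmat X ->
  let d := Q X (ev i) in let c := X *m ev i in
  Q (X - d^-1 *: out c) x = Q X x - (frob X (ev i *m x^T)) ^+ 2 / d.
Proof.
move=> hs d c; rewrite /Q frobDl' frobZl -/(Q (out c) x) Q_out.
by rewrite /c mulmxA -frob_outer mulrC.
Qed.

Lemma step_psd X (i : 'I_n) x : symmat X -> (forall x, 0 <= Q X x) ->
  0 < Q X (ev i) ->
  0 <= Q X x - (frob X (ev i *m x^T)) ^+ 2 / Q X (ev i).
Proof.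
move=> hs hp hd.
set d := Q X (ev i); set b := frob X (ev i *m x^T).
have := hp (1 *: x + (- b / d) *: ev i).
rewrite Q_lin expr1n !mul1r frobD (frob_swap _ _ hs) -/b -/d.
have -> : Q X x + - b / d * (b + b) + (- b / d) ^+ 2 * d = Q X x - b ^+ 2 / d.
  by field; rewrite gt_eqF.
done.
Qed.

Lemma psd_decomp X : symmat X -> (forall x, 0 <= Q X x) ->
  exists L, X = OS L.
Proof.
move=> hs0 hp0.
suff: forall N X, (count (fun j => Q X (ev j) != 0%R) (enum 'I_n) < N)%N ->
  symmat X -> (forall x, 0 <= Q X x) -> exists L, X = OS L.
  by move=> h; apply: h (ltnSn _) hs0 hp0.
clear hs0 hp0.
elim=> [//|N IH] {}X hlt hs hp.
case: (boolP [exists j, Q X (ev j) != 0]); last first.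
  move=> hn; exists [::]; rewrite /OS big_nil; apply: sym_zero => // j.
  by apply/eqP; move: hn; rewrite negb_exists => /forallP /(_ j); rewrite negbK.
case/existsP => i hi.
have hd : 0 < Q X (ev i) by rewrite lt_def hi hp.
set d := Q X (ev i); set c := X *m ev i.
set X' := X - d^-1 *: out c.
have hQ x : Q X' x = Q X x - (frob X (ev i *m x^T)) ^+ 2 / d by apply: step_Q.
have hs' : symmat X'.
  by rewrite /symmat /X' linearB /= linearZ /= outT hs.
have hp' x : 0 <= Q X' x by rewrite hQ; apply: step_psd.
have hle x : Q X' x <= Q X x.
  rewrite hQ lerBlDr lerDl; apply: divr_ge0; [exact: sqr_ge0 | exact: ltW].
have hi' : Q X' (ev i) = 0.
  rewrite hQ -/(Q X (ev i)) -/d; field; by rewrite gt_eqF.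
have [L hL] : exists L, X' = OS L.
  apply: (IH X') => //; rewrite -ltnS; apply: leq_trans hlt.
  apply: (count_lt (x := i)) => //; first move=> j.
  - apply: contra => /eqP h0; apply/eqP; apply/eqP; rewrite eq_le hp' andbT.
    by rewrite -h0 hle.
  - by rewrite mem_enum.
  - by rewrite hi' eqxx.
exists ((Num.sqrt d)^-1 *: c :: L); rewrite /OS big_cons -/(OS L) -hL outZ.
rewrite exprVn sqr_sqrtr ?ltW // /X'; by rewrite addrC subrK.
Qed.

End Decomp2.

Section SeqR.
Variables (R : realType) (T : eqType).
Implicit Types (L : seq T) (f : T -> R).

Lemma sum_rem L f u : u \in L -> \sum_(v <- L) f v = f u + \sum_(v <- rem u L) f v.
Proof. by move=> hu; rewrite (perm_big _ (perm_to_rem hu)) big_cons. Qed.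

Lemma pos_exists L f u : 0 <= \sum_(v <- L) f v -> u \in L -> f u < 0 ->
  exists2 w, w \in L & 0 < f w.
Proof.
move=> hs hu hfu; case: (boolP (has (fun w => 0 < f w) (rem u L))).
  by case/hasP => w /mem_rem hw hpos; exists w.
rewrite -all_predC => /allP hall.
have : \sum_(v <- rem u L) f v <= 0.
  rewrite -oppr_ge0 -sumrN big_seq; apply: sumr_ge0 => v hv.
  by have := hall v hv; rewrite /= -leNgt oppr_ge0.
move: hs; rewrite (sum_rem _ hu) => hs hle.
exfalso; lra.
Qed.

Lemma neg_exists L f v : \sum_(w <- L) f w = 0 -> v \in L -> f v != 0 ->
  exists2 u, u \in L & f u < 0.
Proof.
move=> hs hv hfv; case: (ltrgtP (f v) 0) => [hl|hg|he]; first by exists v.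
  have h0 : 0 <= \sum_(w <- L) - f w by rewrite sumrN hs oppr0.
  have h1 : - f v < 0 by rewrite oppr_lt0.
  have [w hw] := pos_exists h0 hv h1.
  by rewrite oppr_gt0 => hw'; exists w.
by move: hfv; rewrite he eqxx.
Qed.

Lemma count_le_in (p1 p2 : pred T) (s : seq T) :
  (forall y, y \in s -> p1 y -> p2 y) -> (count p1 s <= count p2 s)%N.
Proof.
elim: s => [//|y s IH] h /=; apply: leq_add; last first.
  by apply: IH => z hz; apply: h; rewrite inE hz orbT.
by case: (p1 y) (h y (mem_head _ _)) => // ->.
Qed.

Lemma count_lt_in (p1 p2 : pred T) (s : seq T) x :
  (forall y, y \in s -> p1 y -> p2 y) -> x \in s -> p2 x -> ~~ p1 x ->
  (count p1 s < count p2 s)%N.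
Proof.
elim: s => [//|y s IH] h12; rewrite inE /= => /orP [/eqP <-|hx] h2 h1.
  rewrite h2 (negbTE h1) add0n add1n ltnS; apply: count_le_in => z hz.
  by apply: h12; rewrite inE hz orbT.
have h12' : forall z, z \in s -> p1 z -> p2 z.
  by move=> z hz; apply: h12; rewrite inE hz orbT.
have := IH h12' hx h2 h1; case: (p1 y) (h12 y (mem_head _ _)) => [->//|_] /=.
by rewrite add0n => /leq_trans; apply; apply: leq_addl.
Qed.

End SeqR.

Section Key.
Variables (R : realType) (n : nat).
Implicit Types (A B P X Y : 'M[R]_n) (u v w x y : 'cV[R]_n) (L : seq 'cV[R]_n).

Definition nicepair A B := exists2 c : R, 0 < c &
  (psd (B + c *: A) \/ psd (- (B + c *: A))).

Lemma psd_OS P L : psd P -> 0 <= frob P (OS L).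
Proof. by move=> hP; rewrite -sumQ; apply: sumr_ge0 => v _; apply: psd_Q. Qed.

Lemma psd_zero_span P L u w a b : psd P -> frob P (OS L) = 0 ->
  u \in L -> w \in L -> Q P (a *: u + b *: w) = 0.
Proof.
move=> hP h0 hu hw.
have hall : forall v, v \in L -> Q P v = 0.
  move=> v hv; move: h0; rewrite -sumQ (sum_rem _ hv) => h.
  have h1 := psd_Q v hP.
  have h2 : 0 <= \sum_(x <- rem v L) Q P x.
    by apply: sumr_ge0 => x _; apply: psd_Q.
  lra.
have hp : forall x, 0 <= Q P x by move=> x; apply: psd_Q.
rewrite Q_lin (hall u hu) (hall w hw) (cross0 hp (hall u hu)).
by rewrite !mulr0 !addr0.
Qed.

Lemma keyK (s : seq 'M[R]_n) L A u w a b :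
  (forall B, B \in s -> B != A -> nicepair A B) ->
  (forall B, B \in s -> 0 <= frob B (OS L)) ->
  A \in s ->
  (forall B, B \in s -> frob B (OS L) = 0 -> frob A (OS L) = 0) ->
  u \in L -> w \in L ->
  Q A (a *: u + b *: w) = 0 ->
  forall B, B \in s -> 0 <= Q B (a *: u + b *: w) /\
     (frob B (OS L) = 0 -> Q B (a *: u + b *: w) = 0).
Proof.
move=> hnice hS hA hT hu hw hQA B hB.
set y := a *: u + b *: w.
case: (eqVneq B A) => [->|hBA]; first by rewrite hQA; split.
have [c hc [hP|hP]] := hnice B hB hBA.
- have eQ : Q (B + c *: A) y = Q B y by rewrite /Q frobDl frobZl -/(Q A y) hQA mulr0 addr0.
  split; first by rewrite -eQ; apply: psd_Q.
  move=> hB0; have hA0 := hT B hB hB0.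
  rewrite -eQ; apply: (psd_zero_span (L := L)) => //.
  by rewrite frobDl frobZl hB0 hA0 mulr0 addr0.
- have eQ : Q (- (B + c *: A)) y = - Q B y.
    by rewrite /Q frobNl frobDl frobZl -/(Q A y) hQA mulr0 addr0.
  have hz : frob (- (B + c *: A)) (OS L) = 0.
    have h1 : 0 <= frob (- (B + c *: A)) (OS L) := psd_OS L hP.
    move: h1; rewrite frobNl frobDl frobZl => h1.
    have h2 := hS B hB; have h3 := hS A hA.
    have h4 : 0 <= c * frob A (OS L) by apply: mulr_ge0 => //; apply: ltW.
    lra.
  have := psd_zero_span a b hP hz hu hw; rewrite -/y eQ => /eqP; rewrite oppr_eq0 => /eqP ->.
  by split.
Qed.

Lemma lam_exists (s : seq 'M[R]_n) (S q : 'M[R]_n -> R) :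
  (forall B, B \in s -> 0 <= S B) ->
  (forall B, B \in s -> 0 < q B -> 0 < S B) ->
  exists l : R, [/\ 0 < l, l <= 1, (forall B, B \in s -> l * q B <= S B) &
     (l < 1 -> exists2 B, B \in s & 0 < S B /\ S B = l * q B)].
Proof.
elim: s => [|B0 s IH] hS hq.
  exists 1; split; [exact: ltr01 | exact: lexx | by move=> B; rewrite in_nil | by rewrite ltxx].
have hS' : forall B, B \in s -> 0 <= S B.
  by move=> B hB; apply: hS; rewrite inE hB orbT.
have hq' : forall B, B \in s -> 0 < q B -> 0 < S B.
  by move=> B hB; apply: hq; rewrite inE hB orbT.
have [l [hl0 hl1 hle hlt]] := IH hS' hq'.
have hS0 := hS B0 (mem_head _ _).
case: (lerP (l * q B0) (S B0)) => hB0.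
  exists l; split => //.
  - by move=> B; rewrite inE => /orP [/eqP ->|hB] //; apply: hle.
  - by move=> /hlt [B hB hh]; exists B => //; rewrite inE hB orbT.
have hq0 : 0 < q B0.
  rewrite ltNge; apply/negP => hq0.
  have : l * q B0 <= 0 by apply: mulr_ge0_le0 => //; apply: ltW.
  lra.
have hS0' := hq B0 (mem_head _ _) hq0.
exists (S B0 / q B0); split.
- by apply: divr_gt0.
- rewrite ler_pdivrMr //. have : l * q B0 <= q B0 by rewrite ler_piMl // ltW. lra.
- move=> B; rewrite inE => /orP [/eqP ->|hB].
    by rewrite mulrVK ?unitfE ?gt_eqF //.
  case: (lerP (q B) 0) => hqB.
    have : S B0 / q B0 * q B <= 0.
      by apply: mulr_ge0_le0 => //; apply: ltW; apply: divr_gt0.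
    have := hS B; rewrite inE hB orbT => /(_ isT); lra.
  apply: le_trans (hle B hB); rewrite ler_pM2r // ler_pdivrMr //. lra.
- move=> _; exists B0; first exact: mem_head.
  by split => //; rewrite mulrVK ?unitfE ?gt_eqF.
Qed.

End Key.

Section Core.
Variables (R : realType) (n : nat).
Implicit Types (A B P X Y : 'M[R]_n) (u v w x y : 'cV[R]_n) (L : seq 'cV[R]_n).

Lemma meas1 a b m N : (b * m.+3 + m.+2 < N.+1)%N -> (a <= b)%N ->
  (a * m.+2 + m.+1 < N)%N.
Proof. move=> h1 h2; have := leq_mul h2 (leqnSn m.+2); nia. Qed.

Lemma meas2 a b m N : (b * m.+3 + m.+2 < N.+1)%N -> (a < b)%N ->
  (a * m.+3 + m.+2 < N)%N.
Proof. move=> h1 h2; have := leq_mul h2 (leqnn m.+3); nia. Qed.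

Lemma OS_rem L u : u \in L -> OS L = out u + OS (rem u L).
Proof. by move=> hu; rewrite /OS (perm_big _ (perm_to_rem hu)) big_cons. Qed.

Lemma OS_cons L u : OS (u :: L) = out u + OS L.
Proof. by rewrite /OS big_cons. Qed.

Lemma core (s : seq 'M[R]_n) :
  (forall A B, A \in s -> B \in s -> B != A -> nicepair A B) ->
  forall L, (forall B, B \in s -> 0 <= frob B (OS L)) ->
  exists L', OS L' = OS L /\
    (forall v, v \in L' -> forall A, A \in s -> 0 <= Q A v).
Proof.
move=> hnice.
pose d L := count (fun B => 0 < frob B (OS L)) s.
suff H : forall N L, (d L * (size L).+1 + size L < N)%N ->
  (forall B, B \in s -> 0 <= frob B (OS L)) ->
  exists L', OS L' = OS L /\
    (forall v, v \in L' -> forall A, A \in s -> 0 <= Q A v).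
  by move=> L; apply: H (ltnSn _).
elim=> [//|N IH] L hlt hS.
case: (boolP (all (fun v => all (fun A => 0 <= Q A v) s) L)) => [hall|hnall].
  exists L; split => // v hv A hA.
  by move/allP: hall => /(_ v hv) /allP /(_ A hA).
have [A [u [w [[hA hu hw hqu hqw] hT]]]] : exists A u w,
  [/\ A \in s, u \in L, w \in L, Q A u < 0 & 0 < Q A w] /\
    (forall B, B \in s -> frob B (OS L) = 0 -> frob A (OS L) = 0).
  case: (boolP (has (fun B => frob B (OS L) == 0) s)) => [hT|hnT].
  - case: (boolP (has (fun B => (frob B (OS L) == 0) && has (fun v => Q B v != 0) L) s)) => [|hno].
    + case/hasP => A hA /andP [/eqP hA0 /hasP [v hv hqv]].
      have hsum : \sum_(x <- L) Q A x = 0 by rewrite sumQ.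
      have [u hu hqu] := neg_exists hsum hv hqv.
      have hsum' : 0 <= \sum_(x <- L) Q A x by rewrite hsum.
      have [w hw hqw] := pos_exists hsum' hu hqu.
      by exists A, u, w; split; first by split.
    + exfalso; case/hasP: hT => A hA /eqP hA0.
      have hz : forall v, v \in L -> Q A v = 0.
        move=> v hv; move: hno; rewrite -all_predC => /allP /(_ A hA) /=.
        rewrite hA0 eqxx /= -all_predC => /allP /(_ v hv) /=.
        by rewrite negbK => /eqP.
      apply: (negP hnall); apply/allP => v hv; apply/allP => B hB.
      have hn' : forall B, B \in s -> B != A -> nicepair A B.
        by move=> B' hB'; apply: hnice.
      have h1 : Q A (1 *: v + 0 *: v) = 0 by rewrite scale1r scale0r addr0 hz.
      have := keyK hn' hS hA (fun B _ _ => hA0) hv hv h1 hB.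
      by rewrite scale1r scale0r addr0 => -[].
  - move: hnall; rewrite -has_predC => /hasP [u hu] /=.
    rewrite -has_predC => /hasP [A hA] /=; rewrite -ltNge => hqu.
    have hsum' : 0 <= \sum_(x <- L) Q A x by rewrite sumQ; apply: hS.
    have [w hw hqw] := pos_exists hsum' hu hqu.
    exists A, u, w; split; first by split.
    move=> B hB hB0; exfalso.
    by apply: (negP hnT); apply/hasP; exists B => //; apply/eqP.
set qu := Q A u; set qw := Q A w; set be := frob A (u *m w^T + w *m u^T).
set D := be ^+ 2 - 4 * qu * qw.
have hD : 0 <= D.
  have : 0 < - qu * qw by apply: mulr_gt0 => //; rewrite oppr_gt0.
  have := sqr_ge0 be; rewrite /D; lra.
set t := (- be + Num.sqrt D) / (2 * qw).
have hqw0 : qw != 0 by rewrite gt_eqF.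
have ht : qu + t * be + t ^+ 2 * qw = 0.
  have hsq := sqr_sqrtr hD.
  have -> : qu + t * be + t ^+ 2 * qw =
            (4 * qu * qw - be ^+ 2 + Num.sqrt D ^+ 2) / (4 * qw).
    by rewrite /t; field.
  by rewrite hsq /D; field.
have h1t : 0 < 1 + t ^+ 2 by rewrite ltr_pwDl // sqr_ge0.
set r := (Num.sqrt (1 + t ^+ 2))^-1.
have hr : r ^+ 2 * (1 + t ^+ 2) = 1.
  by rewrite /r exprVn sqr_sqrtr ?ltW // mulVf // gt_eqF.
set y := r *: u + (r * t) *: w.
set y' := (- (r * t)) *: u + r *: w.
have hQy : Q A y = 0.
  rewrite /y Q_lin -/qu -/qw -/be.
  have -> : r ^+ 2 * qu + r * (r * t) * be + (r * t) ^+ 2 * qw =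
            r ^+ 2 * (qu + t * be + t ^+ 2 * qw) by ring.
  by rewrite ht mulr0.
have hout : out y + out y' = out u + out w.
  have e : forall z : R, z = r ^+ 2 * (1 + t ^+ 2) * z by move=> z; rewrite hr mul1r.
  apply/matrixP => i j; rewrite /out !mxE !big_ord1 !mxE.
  by rewrite [RHS]e; ring.
have hn' : forall B, B \in s -> B != A -> nicepair A B.
  by move=> B' hB'; apply: hnice.
have hK := keyK hn' hS hA hT hu hw hQy.
have hq : forall B, B \in s -> 0 < Q B y -> 0 < frob B (OS L).
  move=> B hB hqB; rewrite lt_def hS // andbT; apply/eqP => h0.
  by have [_ /(_ h0)] := hK B hB; move=> e; rewrite e ltxx in hqB.
have [l [hl0 hl1 hle hlam]] := lam_exists hS hq.
have hu' := perm_to_rem hu.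
have hw1 : w \in rem u L.
  move: hw; rewrite (perm_mem hu') inE => /orP [/eqP e|//].
  by move: hqw; rewrite /qw e -/qu => h; exfalso; lra.
set rest := rem w (rem u L).
have hw' := perm_to_rem hw1.
have hOS : OS L = out u + out w + OS rest.
  by rewrite (OS_rem hu) (OS_rem hw1) addrA.
have hsize : size L = (size rest).+2.
  by rewrite (perm_size hu') /= (perm_size hw').
set L1 := if l == 1 then y' :: rest else y' :: (Num.sqrt (1 - l) *: y) :: rest.
have hOS1 : OS L1 = OS L - l *: out y.
  rewrite hOS -hout /L1; case: eqP => [->|_].
    rewrite OS_cons scale1r.
    by apply/matrixP => i j; rewrite !mxE; ring.
  rewrite !OS_cons outZ sqr_sqrtr; last by lra.
  by apply/matrixP => i j; rewrite !mxE; ring.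
have hS1 : forall B, B \in s -> 0 <= frob B (OS L1).
  move=> B hB; rewrite hOS1 frobB frobZ -/(Q B y) subr_ge0; exact: hle.
have hd1 : (d L1 <= d L)%N.
  apply: count_le_in => B hB; rewrite hOS1 frobB frobZ -/(Q B y) => h.
  have [hqB _] := hK B hB.
  have : 0 <= l * Q B y by apply: mulr_ge0 => //; apply: ltW.
  lra.
have hsz : (size L1 = (size rest).+1) \/ (size L1 = (size rest).+2 /\ (d L1 < d L)%N).
  case hl: (l == 1); [left | right]; first by rewrite /L1 hl.
  split; first by rewrite /L1 hl.
  have hlt1 : l < 1 by rewrite lt_neqAle hl1 hl.
  have [B hB [hSB hSBe]] := hlam hlt1.
  apply: (count_lt_in (x := B)) => //.
  - move=> B' hB'; rewrite hOS1 frobB frobZ -/(Q B' y) => h.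
    have [hqB _] := hK B' hB'.
    have : 0 <= l * Q B' y by apply: mulr_ge0 => //; apply: ltW.
    lra.
  - by rewrite /= hOS1 frobB frobZ -/(Q B y) -hSBe subrr ltxx.
have hmeas : (d L1 * (size L1).+1 + size L1 < N)%N.
  move: hlt hd1 hsz; rewrite hsize; move: (d L1) (d L) (size L1) (size rest) => a b c m.
  move=> h1 h2 [->|[-> h3]].
    exact: meas1 h1 h2.
  exact: meas2 h1 h3.
have [L2 [hOS2 hg2]] := IH L1 hmeas hS1.
exists (Num.sqrt l *: y :: L2); split.
  rewrite OS_cons hOS2 hOS1 outZ sqr_sqrtr ?ltW //.
  by rewrite addrC subrK.
move=> v; rewrite inE => /orP [/eqP ->|hv] B hB; last exact: hg2.
rewrite QZ sqr_sqrtr; last exact: ltW.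
have [hh _] := hK B hB; apply: mulr_ge0 => //; exact: ltW.
Qed.

End Core.

Section Gen.
Variables (R : realType) (n : nat).
Implicit Types (A B C D P X Y : 'M[R]_n) (u v w x y : 'cV[R]_n) (L : seq 'cV[R]_n).

Definition pairR (s : seq 'M[R]_n) := forall A B, A \in s -> B \in s ->
  exists a b : R, (a, b) != (0, 0) /\ psd (a *: A + b *: B).

Lemma psdZ P k : psd P -> 0 <= k -> psd (k *: P).
Proof.
move=> [hs hp] hk; split; first by rewrite /symmat linearZ /= hs.
by move=> x; rewrite -scalemxAr -scalemxAl mxE; apply: mulr_ge0.
Qed.

Lemma psd0 : psd (0 : 'M[R]_n).
Proof.
split; first by rewrite /symmat trmx0.
by move=> x; rewrite mulmx0 mul0mx mxE.
Qed.

Lemma psdD P1 P2 : psd P1 -> psd P2 -> psd (P1 + P2).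
Proof.
move=> [hs1 hp1] [hs2 hp2]; split; first by rewrite /symmat linearD /= hs1 hs2.
by move=> x; rewrite mulmxDr mulmxDl mxE; apply: addr_ge0.
Qed.

Lemma gen (s : seq 'M[R]_n) : pairR s ->
  forall L, (forall B, B \in s -> 0 <= frob B (OS L)) ->
  exists L', OS L' = OS L /\
    (forall v, v \in L' -> forall A, A \in s -> 0 <= Q A v).
Proof.
suff H : forall N (s : seq 'M[R]_n), (size s < N)%N -> pairR s ->
  forall L, (forall B, B \in s -> 0 <= frob B (OS L)) ->
  exists L', OS L' = OS L /\
    (forall v, v \in L' -> forall A, A \in s -> 0 <= Q A v).
  by move=> hp; apply: H (ltnSn _) hp.
elim=> [//|N IH] {}s hsz hpair L hS.
case: (classic (forall A B, A \in s -> B \in s -> B != A -> nicepair A B)) => [hn|hn].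
  exact: core.
have [C [D [hC hD hCD hred]]] : exists C D, [/\ C \in s, D \in s, C != D &
   forall L', OS L' = OS L -> (forall v, v \in L' -> 0 <= Q C v) ->
     forall v, v \in L' -> 0 <= Q D v].
  have [A [B [hA hB hBA hnAB]]] : exists A B, [/\ A \in s, B \in s, B != A & ~ nicepair A B].
    apply: NNPP => hc; apply: hn => A B hA hB hBA; apply: NNPP => hnp; apply: hc.
    by exists A, B.
  have [a [b [hab hP]]] := hpair A B hA hB.
  have rem1 : forall C D a b, psd (a *: C + b *: D) -> 0 < b -> a <= 0 ->
      forall v, 0 <= Q C v -> 0 <= Q D v.
    move=> C' D' a' b' hP' hb ha v hv.
    have := psd_Q v hP'; rewrite /Q frobDl !frobZl -!/(Q _ v) => h.
    have : a' * Q C' v <= 0 by apply: mulr_le0_ge0.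
    move=> h2; have h3 : 0 <= b' * Q D' v by lra.
    by move: h3; rewrite pmulr_rge0.
  have rem2 : forall C D a, psd (a *: C + 0 *: D) -> a < 0 ->
      forall L', OS L' = OS L -> C \in s ->
      forall v, v \in L' -> 0 <= Q C v.
    move=> C' D' a' hP' ha L' hL' hC' v hv.
    have hneg : forall x, Q C' x <= 0.
      move=> x; have := psd_Q x hP'; rewrite /Q frobDl !frobZl mul0r addr0 => h.
      by move: h; rewrite nmulr_rge0.
    have := hS C' hC'; rewrite -hL' -sumQ (sum_rem _ hv) => h.
    have : \sum_(x <- rem v L') Q C' x <= 0.
      by rewrite -oppr_ge0 -sumrN; apply: sumr_ge0 => x _; rewrite oppr_ge0.
    lra.
  case: (ltrgtP a 0) => ha; case: (ltrgtP b 0) => hb.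
  - exfalso; apply: hnAB; exists (a / b); first by rewrite -mulrNN -invrN divr_gt0 // oppr_gt0.
    right; have -> : - (B + a / b *: A) = (- b^-1) *: (a *: A + b *: B).
      by apply/matrixP => i j; rewrite !mxE; field; rewrite lt_eqF.
    by apply: psdZ => //; rewrite oppr_ge0 invr_le0 ltW.
  - exists A, B; split => //; first by rewrite eq_sym.
    move=> L' _ hg v hv; apply: (rem1 A B a b hP hb (ltW ha)); exact: hg.
  - exists B, A; split => //.
    move=> L' hL' _ v hv; apply: (rem2 A B a _ ha L' hL' hA v hv).
    by rewrite -hb.
  - exists B, A; split => //.
    move=> L' _ hg v hv; apply: (rem1 B A b a _ ha (ltW hb)); last exact: hg.
    by rewrite addrC.
  - exfalso; apply: hnAB; exists (a / b); first by rewrite divr_gt0.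
    left; have -> : B + a / b *: A = b^-1 *: (a *: A + b *: B).
      by apply/matrixP => i j; rewrite !mxE; field; rewrite gt_eqF.
    by apply: psdZ => //; rewrite invr_ge0 ltW.
  - exists B, A; split => //.
    move=> L' _ hg v hv; apply: (rem1 B A 0 a _ ha (lexx 0)); last exact: hg.
    by rewrite addrC -hb.
  - exists A, B; split => //; first by rewrite eq_sym.
    move=> L' hL' _ v hv; apply: (rem2 B A b _ hb L' hL' hB v hv).
    by rewrite addrC -ha.
  - exists A, B; split => //; first by rewrite eq_sym.
    move=> L' _ hg v hv; apply: (rem1 A B 0 b _ hb (lexx 0)); last exact: hg.
    by rewrite -ha.
  - exfalso; move: hab; by rewrite ha hb eqxx.
set s' := filter (predC1 D) s.
have hsz' : (size s' < N)%N.
  have h1 : (0 < count (predC (predC1 D)) s)%N.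
    by rewrite -has_count; apply/hasP; exists D => //=; rewrite eqxx.
  have h2 := count_predC (predC1 D) s.
  rewrite /s' size_filter.
  move: hsz h1 h2; move: (count (predC1 D) s) (count (predC (predC1 D)) s) (size s).
  move=> x y z; lia.
have hin : forall A, A \in s' -> A \in s.
  by move=> A; rewrite mem_filter => /andP [].
have hpair' : pairR s' by move=> A B hA hB; apply: hpair; apply: hin.
have hS' : forall B, B \in s' -> 0 <= frob B (OS L) by move=> B hB; apply: hS; apply: hin.
have [L' [hOS hg]] := IH s' hsz' hpair' L hS'.
exists L'; split => // v hv A hA.
case: (eqVneq A D) => [->|hAD].
  apply: (hred L' hOS) => // x hx; apply: hg => //.
  by rewrite mem_filter /= hCD.
by apply: hg => //; rewrite mem_filter /= hAD.
Qed.

End Gen.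

Lemma Q_quad (R : realType) (n : nat) (A : 'M[R]_n) x : Q A x = (x^T *m A *m x) 0 0.
Proof. by rewrite /Q /out frob_outer. Qed.

Lemma Q0 (R : realType) (n : nat) (A : 'M[R]_n) : Q A 0 = 0.
Proof. by rewrite -(scale0r (0 : 'cV[R]_n)) QZ expr0n mul0r. Qed.

Lemma SM_out (R : realType) (n k : nat) (M : 'I_k -> 'M[R]_n) v :
  (forall i, 0 <= Q (M i) v) -> SM M (out v).
Proof.
move=> h; split; last by move=> i; exact: h.
split; first exact: outT.
by move=> x; rewrite -Q_quad Q_out sqr_ge0.
Qed.

Unset Implicit Arguments. Set Strict Implicit. Set Printing Implicit Defensive.

Theorem proposition3p3 (R : realType) (n k : nat) (M : 'I_k -> 'M[R]_n)
  (hk : (2 <= k)%N)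
  (hsym : forall i, symmat (M i))
  (hpair : forall i j : 'I_k, i != j ->
     exists a b : R, (a, b) != (0, 0) /\ psd (a *: M i + b *: M j)) :
  ROG (SM M).
Proof.
move=> X; split.
- move=> [[hXs hXp] hXM].
  have [L hL] : exists L, X = OS L.
    by apply: psd_decomp => // x; rewrite Q_quad.
  set s := [seq M i | i <- enum 'I_k].
  have hp : pairR s.
    move=> A B /mapP [i _ ->] /mapP [j _ ->].
    case: (eqVneq i j) => [->|hij]; last exact: hpair.
    exists 1, (-1); split; first by apply/negP => /eqP [] /eqP; rewrite oner_eq0.
    rewrite scaleN1r scale1r subrr; exact: psd0.
  have hS : forall B, B \in s -> 0 <= frob B (OS L).
    by move=> B /mapP [i _ ->]; rewrite -hL.
  have [L' [hOS hg]] := gen hp hS.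
  set L2 := 0 :: L'.
  have hg2 : forall v, v \in L2 -> forall i, 0 <= Q (M i) v.
    move=> v; rewrite inE => /orP [/eqP -> i|hv i]; first by rewrite Q0.
    by apply: hg => //; apply/mapP; exists i => //; rewrite mem_enum.
  set m := size L2.
  have hm : (0 < m)%N by [].
  have hm0 : (m%:R : R) != 0 by rewrite pnatr_eq0 -lt0n.
  exists m, (fun _ => (m%:R)^-1),
    (fun i => out (Num.sqrt (m%:R) *: nth 0 L2 i)).
  split; [|split; [|split]].
  + by move=> i; rewrite invr_ge0 ler0n.
  + by rewrite sumr_const card_ord -(mulr_natl (m%:R)^-1 m) mulfV.
  + move=> i; split; last by exists (Num.sqrt m%:R *: nth 0 L2 i).
    apply: SM_out => j; rewrite QZ sqr_sqrtr ?ler0n //; apply: mulr_ge0 => //.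
    by apply: hg2; apply: mem_nth.
  + rewrite hL -hOS.
    have -> : OS L' = OS L2 by rewrite /L2 OS_cons /out mul0mx add0r.
    rewrite /OS (big_nth 0) big_mkord; apply: eq_bigr => i _.
    by rewrite outZ sqr_sqrtr ?ler0n // scalerA mulVf // scale1r.
- move=> [m [w [A [hw [hsum [hA ->]]]]]].
  apply: (big_ind (fun Y => SM M Y)).
  + split; first exact: psd0.
    by move=> i; rewrite frob0.
  + move=> Y1 Y2 [h1 h1'] [h2 h2']; split; first exact: psdD.
    by move=> i; rewrite frobD; apply: addr_ge0.
  + move=> i _; have [[h1 h1'] _] := hA i; split; first exact: psdZ.
    by move=> j; rewrite frobZ; apply: mulr_ge0.
Qed.
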